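(* Let $$\tau_1(x)=\begin{cases}\tfrac43x,&0\le x<\tfrac38,\\ 4x-1,&\tfrac38\le x<\tfrac12,\\ -4x+3,&\tfrac12\le x<\tfrac58,\\ -\tfrac43x+\tfrac43,&\tfrac58\le x\le1,\end{cases}\qquad \tau_2(x)=\begin{cases}3x,&0\le x<\tfrac16,\\ \tfrac32x+\tfrac14,&\tfrac16\le x<\tfrac12,\\ -\tfrac32x+\tfrac74,&\tfrac12\le x<\tfrac56,\\ -3x+3,&\tfrac56\le x\le1.\end{cases}$$ Then $\tau_1$ preserves the density $f_1=\frac32\chi_{[0,1/2]}+\frac12\chi_{[1/2,1]}$, $\tau_2$ preserves $f_2=\frac23\chi_{[0,1/2]}+\frac43\chi_{[1/2,1]}$, and $1=\frac25f_1+\frac35f_2$. Nevertheless, there is no Borel measurable map $\eta:[0,1]\to[0,1]$ with $\eta(x)\in\{\tau_1(x),\tau_2(x)\}$ for every $x$ that preserves Lebesgue measure. On the other hand, the map $$\tau(x)=\begin{cases}\tau_2(x),&0\le x<\tfrac12,\\ -3x+\tfrac52,&\tfrac12\le x<\tfrac23,\\ -\tfrac32x+\tfrac32,&\tfrac23\le x\le1\end{cases}$$ satisfies $\tau_1\le\tau\le\tau_2$ and preserves Lebesgue measure.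
   Context: A probability density $f$ is preserved by $\tau$ if $\int_{\tau^{-1}(A)}f\,dx=\int_A f\,dx$ for every Borel $A\subseteq[0,1]$; preserving Lebesgue measure means preserving the density $1$. *)

(* Defs.v *)
From Stdlib Require Import Reals Lra ClassicalEpsilon.
Open Scope R_scope.

Inductive borel : (R -> Prop) -> Prop :=
| borel_ray (a : R) : borel (fun x => x < a)
| borel_compl (A : R -> Prop) : borel A -> borel (fun x => ~ A x)
| borel_union (F : nat -> R -> Prop) :
    (forall n, borel (F n)) -> borel (fun x => exists n, F n x)
| borel_ext (A B : R -> Prop) : borel A -> (forall x, A x <-> B x) -> borel B.

Definition unit_interval (x : R) : Prop := 0 <= x <= 1.

Definition subset01 (A : R -> Prop) : Prop := forall x, A x -> unit_interval x.

Definition is_cover_sum (A : R -> Prop) (s : R) : Prop :=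
  exists a b : nat -> R,
    (forall n, a n <= b n) /\
    (forall x, A x -> exists n, a n < x < b n) /\
    infinite_sum (fun n => b n - a n) s.

Definition is_outer_measure (A : R -> Prop) (r : R) : Prop :=
  (forall s, is_cover_sum A s -> r <= s) /\
  (forall r', (forall s, is_cover_sum A s -> r' <= s) -> r' <= r).

(** Lebesgue (outer) measure; well defined (the infimum exists) for bounded A,
    in particular for subsets of [0,1], which is the only use below. *)
Definition leb (A : R -> Prop) : R :=
  epsilon (inhabits 0) (is_outer_measure A).

Definition inter (A B : R -> Prop) : R -> Prop := fun x => A x /\ B x.
Definition I_left (x : R) : Prop := 0 <= x < 1/2.
Definition I_right (x : R) : Prop := 1/2 <= x <= 1.

Definition preim (tau : R -> R) (A : R -> Prop) : R -> Prop :=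
  fun x => unit_interval x /\ A (tau x).

Definition step_density (c1 c2 : R) (x : R) : R :=
  if Rlt_dec x (1/2) then c1 else c2.

Definition step_integral (c1 c2 : R) (A : R -> Prop) : R :=
  c1 * leb (inter A I_left) + c2 * leb (inter A I_right).

Definition preserves_step_density (c1 c2 : R) (tau : R -> R) : Prop :=
  forall A, borel A -> subset01 A ->
    step_integral c1 c2 (preim tau A) = step_integral c1 c2 A.

Definition preserves_lebesgue (tau : R -> R) : Prop :=
  forall A, borel A -> subset01 A -> leb (preim tau A) = leb A.

Definition borel_measurable01 (eta : R -> R) : Prop :=
  forall A, borel A -> subset01 A -> borel (preim eta A).

Definition tau1 (x : R) : R :=
  if Rlt_dec x (3/8) then 4/3 * x
  else if Rlt_dec x (1/2) then 4 * x - 1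
  else if Rlt_dec x (5/8) then -4 * x + 3
  else -4/3 * x + 4/3.

Definition tau2 (x : R) : R :=
  if Rlt_dec x (1/6) then 3 * x
  else if Rlt_dec x (1/2) then 3/2 * x + 1/4
  else if Rlt_dec x (5/6) then -3/2 * x + 7/4
  else -3 * x + 3.

Definition tau (x : R) : R :=
  if Rlt_dec x (1/2) then tau2 x
  else if Rlt_dec x (2/3) then -3 * x + 5/2
  else -3/2 * x + 3/2.

(* Main.v *)
Require Import Defs.
Set Warnings "-all".
From Stdlib Require Import Reals ClassicalEpsilon Lra.
Ltac rfield := field.
Ltac rlra := lra.
From HB Require Import structures.
From mathcomp Require Import all_boot all_order all_algebra.
From mathcomp Require Import all_classical all_reals all_analysis.
From mathcomp Require Import Rstruct Rstruct_topology measurable_realfun lebesgue_measure.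
From mathcomp Require Import ring lra.
Import Order.TTheory GRing.Theory Num.Theory.
Local Open Scope classical_set_scope.
Local Open Scope ring_scope.
Notation Rm := (measurableTypeR R).
Notation lam := (@lebesgue_measure R).

Lemma affine_mf (c d : R) : measurable_fun setT (fun x : Rm => (c * x + d : Rm)).
Proof. by apply: measurable_funD. Qed.

Lemma affine_pos (c d : R) (S : set Rm) : 0 < c -> measurable S ->
  lam S = (c%:E * lam [set x : Rm | S (c * x + d)%R])%E.
Proof.
move=> c0 mS.
have c0' : (0 <= c) by exact: ltW.
have mf := affine_mf c d.
have := (@lebesgue_measure_unique R (mscale (NngNum c0') (pushforward lam (fun x : Rm => (c * x + d : Rm)))) _ S mS).
apply.
move=> _ [[a b]] _ <-.
rewrite /mscale /pushforward /=.
unfold mscale => /=.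

rewrite [X in (_ * lebesgue_measure X)%E](_ : _ = `](a - d) / c, (b - d) / c]%classic); last first.
  apply/seteqP; split => x /=; rewrite !in_itv /=.
    move=> /andP[h1 h2]; apply/andP; split.
      by rewrite ltr_pdivrMr // ltrBlDr mulrC.
    by rewrite ler_pdivlMr // lerBrDr mulrC.
  move=> /andP[h1 h2]; apply/andP; split.
    by move: h1; rewrite ltr_pdivrMr // ltrBlDr mulrC.
  by move: h2; rewrite ler_pdivlMr // lerBrDr mulrC.
rewrite !lebesgue_measure_itv /= !lte_fin ltr_pM2r ?invr_gt0 // ltrD2r.
case: ifP => _; last by rewrite mule0.
by rewrite -EFinB -EFinM; congr (_%:E); field; apply: lt0r_neq0.
Qed.
Lemma borel_meas (A : R -> Prop) : borel A -> measurable (A : set Rm).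
Proof.
elim=> {A}.
- move=> a.
  rewrite (_ : (fun x => Rlt x a) = `]-oo, a[%classic); first exact: measurable_itv.
  by rewrite predeqE => x /=; rewrite in_itv /=; split => /RltP.
- move=> A _ mA.
  rewrite (_ : (fun x => ~ A x) = ~` A); first exact: measurableC.
  by rewrite predeqE.
- move=> F _ mF.
  rewrite (_ : (fun x => exists n, F n x) = \bigcup_n (F n : set Rm)).
    exact: bigcupT_measurable.
  by rewrite predeqE => x; split => [[n h]|[n _ h]]; exists n.
- move=> A B _ mA AB.
  by rewrite (_ : B = A) // predeqE => x; split => /AB.
Qed.

Lemma borel_inter (A B : R -> Prop) : borel A -> borel B -> borel (fun x => A x /\ B x).
Proof.
move=> bA bB.
pose F (n : nat) := if n is 0%N then (fun x => ~ A x) else (fun x => ~ B x).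
apply: (borel_ext (fun x => ~ exists n, F n x)).
  apply: borel_compl; apply: borel_union => -[|n] /=; exact: borel_compl.
move=> x; split.
  move=> h; split.
    by apply: Classical_Prop.NNPP => nA; apply: h; exists 0%N.
  by apply: Classical_Prop.NNPP => nB; apply: h; exists 1%N.
by move=> [hA hB] [[|n] /=].
Qed.

Lemma borel_le (b : R) : borel (fun x => Rle x b).
Proof.
apply: (borel_ext (fun x => ~ exists n : nat, ~ (fun y => Rlt y (b + n.+1%:R^-1)) x)).
  by apply: borel_compl; apply: borel_union => n; apply: borel_compl; exact: borel_ray.
move=> x; split.
  move=> h; apply/RleP; rewrite leNgt; apply/negP => /ltr_add_invr [k hk].
  by apply: h; exists k => /RltP; rewrite ltNge => /negP; apply; apply: ltW.
move=> /RleP h [n]; apply; apply/RltP.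
by apply: (le_lt_trans h); rewrite ltrDl invr_gt0 ltr0Sn.
Qed.

Lemma borel_gt (a : R) : borel (fun x => Rlt a x).
Proof.
apply: (borel_ext _ _ (borel_compl _ (borel_le a))) => x.
split; [exact: Rnot_le_lt | exact: Rlt_not_le].
Qed.

Lemma borel_ge (a : R) : borel (fun x => Rle a x).
Proof.
apply: (borel_ext _ _ (borel_compl _ (borel_ray a))) => x.
split; [exact: Rnot_lt_le | exact: Rle_not_lt].
Qed.

Lemma meas_borel (A : set Rm) : measurable A -> borel A.
Proof.
move=> mA.
have : sigma_algebra setT borel.
  split.
  - apply: (borel_ext _ _ (borel_inter _ _ (borel_ray 0) (borel_compl _ (borel_ray 0)))) => x.
    by split => // -[].
  - move=> B bB. apply: (borel_ext _ _ (borel_compl _ bB)) => x.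
    by split => [h|[]].
  - move=> F bF; apply: (borel_ext _ _ (borel_union F bF)) => x.
    by split => [[n h]|[n _ h]]; exists n.
move=> sB.
apply: (smallest_sub sB _ mA).
move=> _ [[a b] _ <-].
apply: (borel_ext _ _ (borel_inter _ _ (borel_gt a) (borel_le b))) => x /=.
rewrite in_itv /=; split.
  by move=> [/RltP -> /RleP ->].
by move=> /andP[/RltP h1 /RleP h2].
Qed.

Lemma borel_aff (A : R -> Prop) (c d : R) : borel A -> borel (fun x => A (c * x + d)%coqR).
Proof.
move=> /borel_meas mA; apply: meas_borel.
have := affine_mf c d measurableT _ mA; rewrite setTI.
by [].
Qed.
Lemma isum_fwd (u : nat -> R) (s : R) :
  infinite_sum u s -> (\sum_(0 <= k <oo) (u k)%:E = s%:E)%E.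
Proof.
move=> hs; apply: cvg_lim => //.
apply/fine_cvgP; split.
  by near=> n; rewrite sumEFin.
rewrite [X in X @ _ --> _](_ : _ = (fun n => \sum_(0 <= k < n) u k)); last first.
  by apply/funext => n /=; rewrite sumEFin.
rewrite -cvg_shiftS /=.
apply/(@cvgrPdist_lt _ R^o) => e /RltP e0; have [N HN] := hs e e0.
near=> n.
have nN : (n >= N)%coq_nat by apply/ssrnat.leP; near: n; exact: nbhs_infty_ge.
move: (HN n nN); rewrite /R_dist sum_f_R0E => /RltP.
by rewrite distrC RabsE.
Unshelve. all: by end_near. Qed.

Lemma isum_bwd (u : nat -> R) (s : R) : (forall n, 0 <= u n) ->
  (\sum_(0 <= k <oo) (u k)%:E = s%:E)%E -> infinite_sum u s.
Proof.
move=> u0 hs.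
have hc : (fun n => \sum_(0 <= k < n) (u k)%:E)%E @ \oo --> s%:E.
  rewrite -hs; apply: is_cvg_ereal_nneg_natsum => n _; rewrite lee_fin; exact: u0.
move/fine_cvgP : hc => [_ hc].
rewrite [X in X @ _ --> _](_ : _ = (fun n => \sum_(0 <= k < n) u k)) in hc; last first.
  by apply/funext => n /=; rewrite sumEFin.
move: hc; rewrite -cvg_shiftS /= => /(@cvgrPdist_lt _ R^o) hc.
move=> e /RltP e0.
have [N _ HN] := hc e e0.
exists N => n /ssrnat.leP nN.
rewrite /R_dist sum_f_R0E; apply/RltP; rewrite RabsE distrC.
exact: HN.
Qed.

Lemma lamE (A : set Rm) : lam A =
  ereal_inf [set (\sum_(k <oo) wlength idfun (F k))%E | F in open_itv_cover A].
Proof. exact: (@outer_measure_open_itv_cover R A). Qed.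

Lemma lam_cover (A : R -> Prop) s : is_cover_sum A s -> (lam A <= s%:E)%E.
Proof.
move=> [a [b [ab [cov hs]]]].
rewrite lamE; apply: ereal_inf_lbound.
exists (fun k => `]a k, b k[%classic).
  split.
    by move=> k; exists (a k, b k).
  move=> x /cov [n /= [h1 h2]]; exists n => //=.
  by rewrite in_itv /=; apply/andP; split; apply/RltP.
rewrite -(isum_fwd _ _ hs); apply: eq_eseriesr => k _.
rewrite wlength_itv /= lte_fin.
case: ifP => // /negbT; rewrite -leNgt => /RleP h.
have -> : b k = a k by apply: Rle_antisym => //; exact: ab.
by rewrite /= Rminus_diag.
Qed.

Lemma lam_ge0 (A : set Rm) : (0 <= lam A)%E.
Proof. exact: outer_measure_ge0. Qed.

Lemma is_outer_lam (A : R -> Prop) : (lam A < +oo)%E ->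
  is_outer_measure A (fine (lam A)).
Proof.
move=> Afin.
have Af : lam A \is a fin_num by rewrite ge0_fin_numE // lam_ge0.
split.
  move=> s /lam_cover; rewrite -(fineK Af) lee_fin => /RleP; done.
move=> r' hr'.
apply: Rnot_lt_le => /RltP hlt.
have e0 : (0 < r' - fine (lam A))%R by rewrite subr_gt0.
have Ainf : ereal_inf [set (\sum_(k <oo) wlength idfun (F k))%E | F in open_itv_cover (A : set Rm)] \is a fin_num.
  by rewrite -lamE.
have [_ [F [Fitv AF] <-]] := lb_ereal_inf_adherent e0 Ainf.
rewrite -lamE => Fsum.
pose a k := (sval (cid (Fitv k))).1.
pose b k := Rmax (a k) (sval (cid (Fitv k))).2.
have Fk k : F k = `]a k, (sval (cid (Fitv k))).2[%classic.
  by rewrite /a; case: cid => /= -[x y] /=.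
have wl k : wlength idfun (F k) = (b k - a k)%:E.
  rewrite Fk wlength_itv /= lte_fin /b.
  case: ifP => h.
    by rewrite Rmax_right //; apply: Rlt_le; apply/RltP.
  move/negbT : h; rewrite -leNgt => /RleP h.
  by rewrite Rmax_left // subrr.
have ab k : (0 <= b k - a k)%R by rewrite subr_ge0; apply/RleP; exact: Rmax_l.
set S := (\sum_(k <oo) wlength idfun (F k))%E in Fsum.
have S0 : (0 <= S)%E by apply: nneseries_ge0 => k _ _; rewrite wl lee_fin.
have Sf : S \is a fin_num.
  rewrite ge0_fin_numE //; apply: (lt_trans Fsum).
  by rewrite -(fineK Af) -EFinD ltry.
have hS : infinite_sum (fun k => b k - a k) (fine S).
  apply: isum_bwd => //.
  by rewrite fineK // /S; apply: eq_eseriesr => k _; rewrite wl.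
have cov : is_cover_sum A (fine S).
  exists a, b; split; first by move=> n; exact: Rmax_l.
  split => // x Ax.
  have [n _] := AF x Ax.
  rewrite Fk /= in_itv /= => /andP[/RltP h1 /RltP h2].
  exists n; split => //; apply: (Rlt_le_trans _ _ _ h2); exact: Rmax_r.
have := hr' _ cov => /RleP.
move: Fsum; rewrite -(fineK Sf) -(fineK Af) -EFinD lte_fin.
rewrite addrC subrK => h1 h2.
by move: (lt_le_trans h1 h2); rewrite ltxx.
Qed.

Lemma leb_lam (A : R -> Prop) : (lam A < +oo)%E -> leb A = fine (lam A).
Proof.
move=> Afin; have H := is_outer_lam _ Afin.
rewrite /leb; set r := epsilon _ _.
have Hr : is_outer_measure A r.
  by apply: (epsilon_spec (inhabits 0%R) (is_outer_measure A)); exists (fine (lam A)).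
apply: Rle_antisym.
  by apply: H.2; apply: Hr.1.
by apply: Hr.2; apply: H.1.
Qed.

Lemma affine_gen (c d : R) (S : set Rm) : c != 0 -> measurable S ->
  lam S = (`|c|%:E * lam [set x : Rm | S (c * x + d)%R])%E.
Proof.
move=> c0 mS.
have [cp|cn] := ltP 0 c.
  by rewrite gtr0_norm //; exact: (affine_pos c d S cp mS).
have cn' : c < 0 by rewrite lt_neqAle c0 cn.
have cp' : 0 < - c by rewrite oppr_gt0.
rewrite ltr0_norm // (affine_pos (- c) d S cp' mS).
congr (_ * _)%E.
have mT : measurable [set x : Rm | S (- c * x + d)%R].
  by have := affine_mf (- c) d measurableT _ mS; rewrite setTI.
rewrite -(lebesgue_measureN mT) /pushforward.
congr (lam _); apply/seteqP; split => x /=; by rewrite mulrN mulNr opprK.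
Qed.

Definition mm (A : R -> Prop) : R := fine (lam A).
Definition bnd (A : R -> Prop) : Prop := exists a b : R, forall x, A x -> (a <= x <= b)%coqR.

Lemma lam_le (A B : R -> Prop) : (forall x, A x -> B x) -> (lam A <= lam B)%E.
Proof. by move=> AB; apply: le_outer_measure. Qed.

Lemma lam_fin (A : R -> Prop) : bnd A -> lam A \is a fin_num.
Proof.
move=> [a [b hab]].
rewrite ge0_fin_numE ?lam_ge0 //.
apply: (le_lt_trans (@lam_le A `[a, b]%classic _)).
  move=> x /hab [h1 h2] /=; rewrite in_itv /=; apply/andP; split; exact/RleP.
by rewrite lebesgue_measure_itv /=; case: ifP => _; rewrite ?ltry.
Qed.

Lemma mm_ge0 A : (0 <= mm A)%coqR.
Proof. by apply/RleP; apply: fine_ge0; exact: lam_ge0. Qed.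

Lemma mm_ext (A B : R -> Prop) : (forall x, A x <-> B x) -> mm A = mm B.
Proof. by move=> h; rewrite /mm (_ : A = B) //; rewrite predeqE. Qed.

Lemma mm_le (A B : R -> Prop) : bnd B -> (forall x, A x -> B x) -> (mm A <= mm B)%coqR.
Proof.
move=> bB AB; apply/RleP; apply: fine_le.
- rewrite ge0_fin_numE ?lam_ge0 //; apply: (le_lt_trans (lam_le _ _ AB)).
  by rewrite -ge0_fin_numE ?lam_ge0 // lam_fin.
- exact: lam_fin.
- exact: lam_le.
Qed.

Lemma bnd_sub (A B : R -> Prop) : bnd B -> (forall x, A x -> B x) -> bnd A.
Proof. by move=> [a [b h]] AB; exists a, b => x /AB /h. Qed.

Lemma mm_union (A B : R -> Prop) : borel A -> borel B -> bnd A -> bnd B ->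
  (forall x, A x -> B x -> False) -> mm (fun x => A x \/ B x) = (mm A + mm B)%coqR.
Proof.
move=> /borel_meas mA /borel_meas mB bA bB dAB.
rewrite /mm (_ : (fun x => A x \/ B x) = (A `|` B : set Rm)) //.
rewrite measureU //; last by rewrite predeqE => x; split => // -[] /dAB.
by rewrite fineD // lam_fin.
Qed.

Lemma mm_aff (A : R -> Prop) (c d : R) : borel A -> bnd A -> c <> 0%coqR ->
  mm (fun x => A (c * x + d)%coqR) = (mm A / Rabs c)%coqR.
Proof.
move=> /borel_meas mA bA c0.
have c0' : c != 0 by apply/eqP.
have hA := lam_fin _ bA.
have E := affine_gen c d A c0' mA.
have hP : lam [set x : Rm | A (c * x + d)%R] \is a fin_num.
  rewrite (_ : lam _ = ((`|c|^-1)%:E * lam A)%E); first exact: fin_numM.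
  by rewrite E muleA -EFinM mulVf ?normr_eq0 // mul1e.
rewrite /mm E fineM //=.
by rewrite RdivE RabsE mulrAC divff ?normr_eq0 // mul1r.
Qed.

Lemma lam_pt (A B : R -> Prop) (p : R) : borel B ->
  (forall x, x <> p -> A x -> B x) -> (lam A <= lam B)%E.
Proof.
move=> /borel_meas mB h.
apply: (@le_trans _ _ (lam (B `|` [set p] : set Rm))).
  apply: lam_le => x Ax; case: (Req_dec x p) => [->|xp]; [by right|left; exact: h].
by rewrite measureU0 //; exact: lebesgue_measure_set1.
Qed.

Lemma mm_pt (A B : R -> Prop) (p : R) : borel A -> borel B ->
  (forall x, x <> p -> (A x <-> B x)) -> mm A = mm B.
Proof.
move=> bA bB h; rewrite /mm; congr fine; apply/eqP; rewrite eq_le; apply/andP; split.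
  by apply: (lam_pt _ _ p bB) => x /h [].
by apply: (lam_pt _ _ p bA) => x /h [].
Qed.

Lemma mm_itv (a b : R) : (a <= b)%coqR -> mm (fun x => a < x < b)%coqR = (b - a)%coqR.
Proof.
move=> ab; rewrite /mm (_ : (fun x => a < x < b)%coqR = `]a, b[%classic).
  rewrite lebesgue_measure_itv /= lte_fin.
  case: ifP => //= /negbT; rewrite -leNgt => /RleP ba.
  by rewrite (Rle_antisym _ _ ab ba) Rminus_diag.
rewrite predeqE => x /=; rewrite in_itv /=; split.
  by move=> [/RltP -> /RltP ->].
by move=> /andP[/RltP ? /RltP ?].
Qed.

Lemma leb_mm (A : R -> Prop) : subset01 A -> leb A = mm A.
Proof.
move=> h; apply: leb_lam.
rewrite -ge0_fin_numE ?lam_ge0 //; apply: lam_fin.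
by exists 0%coqR, 1%coqR.
Qed.

Lemma borel_Z (eta : R -> R) :
  (forall x, unit_interval x -> unit_interval (eta x)) -> borel_measurable01 eta ->
  forall c d : R, borel (fun x => unit_interval x /\ eta x = (c * x + d)%coqR).
Proof.
move=> H1 H2 c d.
have mD : measurable (`[0%R, 1%R]%classic : set Rm) by [].
have meta : measurable_fun (`[0%R, 1%R]%classic : set Rm) (fun x : Rm => (eta x : Rm)).
  move=> _ Y mY.
  have mY' : measurable (Y `&` `[0%R, 1%R]%classic : set Rm) by apply: measurableI.
  have := H2 _ (meas_borel _ mY').
  have s01 : subset01 (Y `&` `[0%R, 1%R]%classic).
    move=> y [_ /=]; rewrite in_itv /= => /andP[/RleP ? /RleP ?]; by split.
  move=> /(_ s01) /borel_meas.
  congr measurable; rewrite predeqE => x /=; rewrite /Defs.preim /unit_interval in_itv /=.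
  split.
    move=> [[h1 h2] [hY _]]; split; last exact: hY.
    by apply/andP; split; apply/RleP.
  move=> [/andP[/RleP h1 /RleP h2] hY]; split; first by split.
  split; first exact: hY.
  rewrite in_itv /=; have [h3 h4] := H1 x (conj h1 h2).
  by apply/andP; split; apply/RleP.
have mg : measurable_fun (`[0%R, 1%R]%classic : set Rm) (fun x : Rm => (c * x + d : Rm)).
  exact: (measurable_funS measurableT (@subsetT _ _) (affine_mf c d)).
have := measurable_funB meta mg mD (measurable_set1 0%R).
move/meas_borel => hb.
apply: (borel_ext _ _ hb) => x /=; rewrite in_itv /=; split.
  move=> [/andP[/RleP ? /RleP ?] /eqP]; rewrite subr_eq0 => /eqP ->; by split.
move=> [[h1 h2] ->]; split; last by rewrite subrr.
by apply/andP; split; apply/RleP.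
Qed.

Lemma mm_or_le (A B : R -> Prop) : borel A -> borel B -> bnd A -> bnd B ->
  (mm (fun x => A x \/ B x) <= mm A + mm B)%coqR.
Proof.
move=> /borel_meas mA /borel_meas mB bA bB.
have hA := lam_fin _ bA; have hB := lam_fin _ bB.
rewrite /mm (_ : (fun x => A x \/ B x) = (A `|` B : set Rm)) //.
apply/RleP; rewrite (_ : (fine (lam A) + fine (lam B))%coqR = fine (lam A + lam B)%E); last by rewrite fineD.
apply: fine_le; rewrite ?fin_numD ?hA ?hB //.
  rewrite ge0_fin_numE ?lam_ge0 //; apply: (le_lt_trans (measureU2 _ mA mB)).
  by rewrite -ge0_fin_numE ?adde_ge0 ?lam_ge0 // fin_numD hA hB.
exact: measureU2.
Qed.

Lemma mm_empty (A : R -> Prop) : (forall x, ~ A x) -> mm A = 0%R.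
Proof.
move=> h; rewrite /mm (_ : A = set0) ?measure0 //.
by rewrite predeqE => x; split => // /h.
Qed.

Local Close Scope ring_scope.
Local Open Scope R_scope.

Lemma borel_or (A B : R -> Prop) : borel A -> borel B -> borel (fun x => A x \/ B x).
Proof.
move=> bA bB.
apply: (borel_ext _ _ (borel_compl _ (borel_inter _ _ (borel_compl _ bA) (borel_compl _ bB)))).
move=> x; split.
  move=> h; apply: Classical_Prop.NNPP => h'; apply: h; split => ?; apply: h'; by [left|right].
by move=> [h|h] [h1 h2].
Qed.

Lemma borel_rng (A : R -> Prop) (lo hi : R) (b1 b2 : bool) : borel A ->
  borel (fun y => A y /\ (if b1 then lo <= y else lo < y) /\ (if b2 then y <= hi else y < hi)).
Proof.
move=> bA; apply: borel_inter => //; apply: borel_inter.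
  by case: b1; [exact: borel_ge|exact: borel_gt].
by case: b2; [exact: borel_le|exact: borel_ray].
Qed.

Lemma bnd01 (A : R -> Prop) : (forall x, A x -> 0 <= x <= 1) -> bnd A.
Proof. by move=> h; exists 0, 1. Qed.

Lemma leb_inter (A B : R -> Prop) : subset01 A -> leb (Defs.inter A B) = mm (Defs.inter A B).
Proof. by move=> h; apply: leb_mm => x [/h]. Qed.

Lemma preim01 tau A : subset01 (Defs.preim tau A).
Proof. by move=> x []. Qed.

Definition rng (A : R -> Prop) (lo hi : R) (b1 b2 : bool) : R -> Prop :=
  fun y => A y /\ (if b1 then lo <= y else lo < y) /\ (if b2 then y <= hi else y < hi).
Definition pc (S : R -> Prop) (c d : R) : R -> Prop := fun x => S (c * x + d).

Lemma borel_pc S c d : borel S -> borel (pc S c d).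
Proof. exact: borel_aff. Qed.

Lemma mm_pc S c d : borel S -> bnd S -> c <> 0 -> mm (pc S c d) = mm S / Rabs c.
Proof. exact: mm_aff. Qed.

Ltac solveA := match goal with | H : ?A ?u |- ?A ?v => replace v with u by rlra; exact H end.

Lemma tau1_cases x : (x < 3/8 /\ tau1 x = 4/3*x) \/ (3/8 <= x < 1/2 /\ tau1 x = 4*x-1) \/
  (1/2 <= x < 5/8 /\ tau1 x = -4*x+3) \/ (5/8 <= x /\ tau1 x = -4/3*x+4/3).
Proof.
rewrite /tau1; repeat case: Rlt_dec => ?.
all: try (left; split; [rlra|reflexivity]).
all: try (right; left; split; [rlra|reflexivity]).
all: try (right; right; left; split; [rlra|reflexivity]).
all: right; right; right; split; [rlra|reflexivity].
Qed.

Lemma tau1_left (A : R -> Prop) x : 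
  Defs.inter (Defs.preim tau1 A) I_left x <->
  (pc (rng A 0 (1/2) true false) (4/3) 0 x \/ pc (rng A (1/2) 1 true false) 4 (-1) x).
Proof.
rewrite /Defs.inter /Defs.preim /I_left /pc /rng /unit_interval /=.
split.
- move=> [[[h0 h1] hA] [h2 h3]].
  case: (tau1_cases x) => [[c e]|[[c e]|[[c e]|[c e]]]]; rewrite e in hA.
  + by left; split; [solveA|rlra].
  + by right; split; [solveA|rlra].
  + exfalso; rlra.
  + exfalso; rlra.
- case => [[hA hr]|[hA hr]].
  + case: (tau1_cases x) => [[c e]|[[c e]|[[c e]|[c e]]]]; try (exfalso; rlra).
    by split; [split; [rlra|rewrite e; solveA]|rlra].
  + case: (tau1_cases x) => [[c e]|[[c e]|[[c e]|[c e]]]]; try (exfalso; rlra).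
    by split; [split; [rlra|rewrite e; solveA]|rlra].
Qed.

Lemma borel_rngR A lo hi b1 b2 : borel A -> borel (rng A lo hi b1 b2).
Proof. exact: borel_rng. Qed.

Lemma tau1_right (A : R -> Prop) x : 
  Defs.inter (Defs.preim tau1 A) I_right x <->
  (pc (rng A (1/2) 1 false true) (-4) 3 x \/ pc (rng A 0 (1/2) true true) (-4/3) (4/3) x).
Proof.
rewrite /Defs.inter /Defs.preim /I_right /pc /rng /unit_interval /=.
split.
- move=> [[[h0 h1] hA] [h2 h3]].
  case: (tau1_cases x) => [[c e]|[[c e]|[[c e]|[c e]]]]; rewrite e in hA.
  + exfalso; rlra.
  + exfalso; rlra.
  + by left; split; [solveA|rlra].
  + by right; split; [solveA|rlra].
- case => [[hA hr]|[hA hr]].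
  + case: (tau1_cases x) => [[c e]|[[c e]|[[c e]|[c e]]]]; try (exfalso; rlra).
    by split; [split; [rlra|rewrite e; solveA]|rlra].
  + case: (tau1_cases x) => [[c e]|[[c e]|[[c e]|[c e]]]]; try (exfalso; rlra).
    by split; [split; [rlra|rewrite e; solveA]|rlra].
Qed.

Lemma bnd_rng A lo hi b1 b2 : 0 <= lo -> hi <= 1 -> bnd (rng A lo hi b1 b2).
Proof.
move=> h1 h2; apply: bnd01 => x [_ [h3 h4]].
by case: b1 h3; case: b2 h4 => /= ? ?; rlra.
Qed.

Lemma bnd_pc A lo hi b1 b2 c d :
  (forall x, lo <= c * x + d <= hi -> 0 <= x <= 1) -> bnd (pc (rng A lo hi b1 b2) c d).
Proof.
move=> h; apply: bnd01 => x [_ [h3 h4]]; apply: h.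
by case: b1 h3; case: b2 h4 => /= ? ?; rlra.
Qed.

Lemma mm_L A : mm (rng A 0 (1/2) true false) = mm (Defs.inter A I_left).
Proof. by []. Qed.

Lemma mm_Lc A : borel A -> mm (rng A 0 (1/2) true true) = mm (Defs.inter A I_left).
Proof.
move=> bA; apply: (mm_pt _ _ (1/2)); first exact: borel_rngR.
  by apply: (borel_rngR _ _ _ true false).
by rewrite /rng /Defs.inter /I_left /= => x hx; split => -[? ?]; split => //; rlra.
Qed.

Lemma mm_Ro A : borel A -> mm (rng A (1/2) 1 true false) = mm (Defs.inter A I_right).
Proof.
move=> bA; apply: (mm_pt _ _ 1); first exact: borel_rngR.
  by apply: (borel_rngR _ _ _ true true).
by rewrite /rng /Defs.inter /I_right /= => x hx; split => -[? ?]; split => //; rlra.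
Qed.

Lemma mm_Rc A : borel A -> mm (rng A (1/2) 1 false true) = mm (Defs.inter A I_right).
Proof.
move=> bA; apply: (mm_pt _ _ (1/2)); first exact: borel_rngR.
  by apply: (borel_rngR _ _ _ true true).
by rewrite /rng /Defs.inter /I_right /= => x hx; split => -[? ?]; split => //; rlra.
Qed.

Ltac side := 
  first [ apply: borel_pc; apply: borel_rngR; assumption
        | apply: bnd_pc => ? ?; rlra
        | move=> ? [_ ?] [_ ?]; rlra
        | apply: borel_rngR; assumption
        | apply: bnd_rng; rlra
        | rlra ].

Lemma part_tau1 : preserves_step_density (3/2) (1/2) tau1.
Proof.
move=> A bA sA; rewrite /step_integral !leb_inter //; try exact: preim01.
rewrite (mm_ext _ _ (tau1_left A)) (mm_ext _ _ (tau1_right A)).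
rewrite !mm_union; try side.
rewrite !mm_pc; try side.
rewrite mm_L mm_Lc // mm_Ro // mm_Rc //.
rewrite (Rabs_pos_eq (4/3)); last rlra.
rewrite (Rabs_pos_eq 4); last rlra.
rewrite (Rabs_left (-4)); last rlra.
rewrite (Rabs_left (-4/3)); last rlra.
rfield.
Qed.

Lemma tau2_cases x : (x < 1/6 /\ tau2 x = 3*x) \/ (1/6 <= x < 1/2 /\ tau2 x = 3/2*x+1/4) \/
  (1/2 <= x < 5/6 /\ tau2 x = -3/2*x+7/4) \/ (5/6 <= x /\ tau2 x = -3*x+3).
Proof.
rewrite /tau2; repeat case: Rlt_dec => ?.
all: try (left; split; [rlra|reflexivity]).
all: try (right; left; split; [rlra|reflexivity]).
all: try (right; right; left; split; [rlra|reflexivity]).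
all: right; right; right; split; [rlra|reflexivity].
Qed.

Lemma tau_cases x : (x < 1/6 /\ tau x = 3*x) \/ (1/6 <= x < 1/2 /\ tau x = 3/2*x+1/4) \/
  (1/2 <= x < 2/3 /\ tau x = -3*x+5/2) \/ (2/3 <= x /\ tau x = -3/2*x+3/2).
Proof.
rewrite /tau; case: Rlt_dec => h.
  case: (tau2_cases x) => [[c e]|[[c e]|[[c e]|[c e]]]]; rewrite e; try (exfalso; rlra).
    by left.
  by right; left.
repeat case: Rlt_dec => ?.
all: try (right; right; left; split; [rlra|reflexivity]).
all: right; right; right; split; [rlra|reflexivity].
Qed.

Ltac fwd2 := first [ by left; split; [solveA|rlra] | by right; split; [solveA|rlra] | exfalso; rlra ].
Ltac bwdI e := by split; [split; [rlra|rewrite e; solveA]|rlra].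

Lemma tau2_left (A : R -> Prop) x : 
  Defs.inter (Defs.preim tau2 A) I_left x <->
  (pc (rng A 0 (1/2) true false) 3 0 x \/ pc (rng A (1/2) 1 true false) (3/2) (1/4) x).
Proof.
rewrite /Defs.inter /Defs.preim /I_left /pc /rng /unit_interval /=.
split.
- move=> [[[h0 h1] hA] [h2 h3]].
  case: (tau2_cases x) => [[c e]|[[c e]|[[c e]|[c e]]]]; rewrite e in hA; fwd2.
- case => [[hA hr]|[hA hr]];
  case: (tau2_cases x) => [[c e]|[[c e]|[[c e]|[c e]]]]; try (exfalso; rlra); bwdI e.
Qed.

Lemma tau2_right (A : R -> Prop) x : 
  Defs.inter (Defs.preim tau2 A) I_right x <->
  (pc (rng A (1/2) 1 false true) (-3/2) (7/4) x \/ pc (rng A 0 (1/2) true true) (-3) 3 x).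
Proof.
rewrite /Defs.inter /Defs.preim /I_right /pc /rng /unit_interval /=.
split.
- move=> [[[h0 h1] hA] [h2 h3]].
  case: (tau2_cases x) => [[c e]|[[c e]|[[c e]|[c e]]]]; rewrite e in hA; fwd2.
- case => [[hA hr]|[hA hr]];
  case: (tau2_cases x) => [[c e]|[[c e]|[[c e]|[c e]]]]; try (exfalso; rlra); bwdI e.
Qed.

Lemma part_tau2 : preserves_step_density (2/3) (4/3) tau2.
Proof.
move=> A bA sA; rewrite /step_integral !leb_inter //; try exact: preim01.
rewrite (mm_ext _ _ (tau2_left A)) (mm_ext _ _ (tau2_right A)).
rewrite !mm_union; try side.
rewrite !mm_pc; try side.
rewrite mm_L mm_Lc // mm_Ro // mm_Rc //.
rewrite (Rabs_pos_eq 3); last rlra.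
rewrite (Rabs_pos_eq (3/2)); last rlra.
rewrite (Rabs_left (-3)); last rlra.
rewrite (Rabs_left (-3/2)); last rlra.
rfield.
Qed.

Lemma tau_preim (A : R -> Prop) x : 
  Defs.preim tau A x <->
  ((pc (rng A 0 (1/2) true false) 3 0 x \/ pc (rng A (1/2) 1 true false) (3/2) (1/4) x) \/
   (pc (rng A (1/2) 1 false true) (-3) (5/2) x \/ pc (rng A 0 (1/2) true true) (-3/2) (3/2) x)).
Proof.
rewrite /Defs.preim /pc /rng /unit_interval /=.
split.
- move=> [[h0 h1] hA].
  case: (tau_cases x) => [[c e]|[[c e]|[[c e]|[c e]]]]; rewrite e in hA.
  + by left; left; split; [solveA|rlra].
  + by left; right; split; [solveA|rlra].
  + by right; left; split; [solveA|rlra].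
  + by right; right; split; [solveA|rlra].
- case => [[[hA hr]|[hA hr]]|[[hA hr]|[hA hr]]];
  case: (tau_cases x) => [[c e]|[[c e]|[[c e]|[c e]]]]; try (exfalso; rlra);
  by split; [rlra|rewrite e; solveA].
Qed.

Lemma mm_split (A : R -> Prop) : borel A -> subset01 A ->
  mm A = mm (Defs.inter A I_left) + mm (Defs.inter A I_right).
Proof.
move=> bA sA.
rewrite (mm_ext A (fun x => Defs.inter A I_left x \/ Defs.inter A I_right x)); last first.
  move=> x; rewrite /Defs.inter /I_left /I_right; split.
    move=> hA; have [? ?] := sA x hA.
    case: (Rlt_dec x (1/2)) => ?; [left|right]; split => //; rlra.
  by case => -[].
have bL : borel (Defs.inter A I_left).
  by apply: (borel_rngR _ 0 (1/2) true false).
have bR : borel (Defs.inter A I_right).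
  by apply: (borel_rngR _ (1/2) 1 true true).
rewrite mm_union //.
- by apply: (bnd_rng _ 0 (1/2) true false); rlra.
- by apply: (bnd_rng _ (1/2) 1 true true); rlra.
- by move=> x [_ [_ ?]] [_ [? _]]; rlra.
Qed.

Lemma part_tau : preserves_lebesgue tau.
Proof.
move=> A bA sA; rewrite !leb_mm //; try exact: preim01.
rewrite (mm_ext _ _ (tau_preim A)) (mm_split A bA sA).
rewrite !mm_union; try side; try (apply: borel_or; side); try (apply: bnd01 => ? [[_ ?]|[_ ?]]; rlra);
  try (move=> ? [[_ ?]|[_ ?]] [[_ ?]|[_ ?]]; rlra).
rewrite !mm_pc; try side.
rewrite mm_L mm_Lc // mm_Ro // mm_Rc //.
rewrite (Rabs_pos_eq 3); last rlra.
rewrite (Rabs_pos_eq (3/2)); last rlra.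
rewrite (Rabs_left (-3)); last rlra.
rewrite (Rabs_left (-3/2)); last rlra.
rfield.
Qed.

Lemma part_dens : forall x, unit_interval x ->
     1 = 2/5 * step_density (3/2) (1/2) x + 3/5 * step_density (2/3) (4/3) x.
Proof. by move=> x _; rewrite /step_density; case: Rlt_dec => _; rfield. Qed.

Lemma part_ineq : forall x, unit_interval x -> tau1 x <= tau x <= tau2 x.
Proof.
move=> x [h0 h1].
case: (tau1_cases x) => [[c1 e1]|[[c1 e1]|[[c1 e1]|[c1 e1]]]];
case: (tau_cases x) => [[c e]|[[c e]|[[c e]|[c e]]]];
case: (tau2_cases x) => [[c2 e2]|[[c2 e2]|[[c2 e2]|[c2 e2]]]];
rewrite e1 e e2; rlra.
Qed.

Definition mt (b : bool) (P : Prop) : Prop := if b then P else ~ P.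
Definition Ek (eta : R -> R) (a e y : R) : Prop := (1/2 < y < 1) /\ eta (a*y+e) = y.
Definition At (eta : R -> R) (b1 b2 b3 b4 : bool) (y : R) : Prop :=
  (1/2 < y < 1) /\ mt b1 (Ek eta (1/4) (1/4) y) /\ mt b2 (Ek eta (-1/4) (3/4) y) /\
  mt b3 (Ek eta (2/3) (-1/6) y) /\ mt b4 (Ek eta (-2/3) (7/6) y).

Lemma borel_J : borel (fun y => 1/2 < y < 1).
Proof. exact: (borel_inter _ _ (borel_gt _) (borel_ray _)). Qed.

Lemma borel_Ek eta (H1 : forall x, unit_interval x -> unit_interval (eta x))
  (H2 : borel_measurable01 eta) a e c d :
  (forall y, 1/2 < y < 1 -> 0 <= a*y+e <= 1) -> (forall y, c*(a*y+e)+d = y) ->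
  borel (Ek eta a e).
Proof.
move=> hr hid.
apply: (borel_ext _ _ (borel_inter _ _ borel_J (borel_aff _ a e (borel_Z eta H1 H2 c d)))).
move=> y; rewrite /Ek; split.
  by move=> [hJ [_ he]]; split => //; rewrite he hid.
move=> [hJ he]; split => //; split; first exact: hr.
by rewrite he hid.
Qed.

Lemma borel_empty : borel (fun _ => False).
Proof.
apply: (borel_ext _ _ (borel_inter _ _ (borel_ray 0) (borel_compl _ (borel_ray 0)))) => x.
by split => // -[].
Qed.

Lemma borel_mt (P : R -> Prop) b : borel P -> borel (fun y => mt b (P y)).
Proof. by case: b => //= bP; apply: borel_compl. Qed.

Lemma borel_At eta (H1 : forall x, unit_interval x -> unit_interval (eta x))
  (H2 : borel_measurable01 eta) b1 b2 b3 b4 : borel (At eta b1 b2 b3 b4).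
Proof.
apply: borel_inter; first exact: borel_J.
apply: borel_inter; first (apply: borel_mt; apply: (borel_Ek _ H1 H2 _ _ 4 (-1)); move=> *; rlra).
apply: borel_inter; first (apply: borel_mt; apply: (borel_Ek _ H1 H2 _ _ (-4) 3); move=> *; rlra).
apply: borel_inter; first (apply: borel_mt; apply: (borel_Ek _ H1 H2 _ _ (3/2) (1/4)); move=> *; rlra).
apply: borel_mt; apply: (borel_Ek _ H1 H2 _ _ (-3/2) (7/4)); move=> *; rlra.
Qed.

Definition null (S : R -> Prop) := borel S /\ bnd S /\ mm S = 0.

Lemma bnd_or (A B : R -> Prop) : bnd A -> bnd B -> bnd (fun x => A x \/ B x).
Proof.
move=> [a [b h]] [a' [b' h']]; exists (Rmin a a'), (Rmax b b') => x [/h|/h'] [? ?].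
  by split; [apply: Rle_trans (Rmin_l _ _) _|apply: Rle_trans _ (Rmax_l _ _)].
by split; [apply: Rle_trans (Rmin_r _ _) _|apply: Rle_trans _ (Rmax_r _ _)].
Qed.

Lemma null_ex (F : bool -> R -> Prop) : (forall b, null (F b)) -> null (fun y => exists b, F b y).
Proof.
move=> h; have [b1 [d1 m1]] := h true; have [b2 [d2 m2]] := h false.
have E : forall y, (exists b, F b y) <-> (F true y \/ F false y).
  by move=> y; split => [[[]]|[]]; [left|right|exists true|exists false].
split; first by apply: (borel_ext _ _ (borel_or _ _ b1 b2)) => y; rewrite E.
split; first by apply: (bnd_sub _ _ (bnd_or _ _ d1 d2)) => y /E.
rewrite (mm_ext _ _ E); apply: Rle_antisym; last exact: mm_ge0.
by apply: Rle_trans (mm_or_le _ _ b1 b2 d1 d2) _; rewrite m1 m2; rlra.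
Qed.


Lemma At_1 (eta : R -> R) (b1 b2 b3 b4 : bool) (x : R) : b1 -> At eta b1 b2 b3 b4 (4*x + -1) ->
  eta x = 4*x + -1 /\ 1/2 < 4*x + -1 < 1.
Proof.
move=> hb [hJ [m _]]; move: m; rewrite /mt hb => -[_ e]; split => //.
by rewrite -e; congr eta; rlra.
Qed.
Lemma At_2 (eta : R -> R) (b1 b2 b3 b4 : bool) (x : R) : b2 -> At eta b1 b2 b3 b4 (-4*x + 3) ->
  eta x = -4*x + 3 /\ 1/2 < -4*x + 3 < 1.
Proof.
move=> hb [hJ [_ [m _]]]; move: m; rewrite /mt hb => -[_ e]; split => //.
by rewrite -e; congr eta; rlra.
Qed.
Lemma At_3 (eta : R -> R) (b1 b2 b3 b4 : bool) (x : R) : b3 -> At eta b1 b2 b3 b4 (3/2*x + 1/4) ->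
  eta x = 3/2*x + 1/4 /\ 1/2 < 3/2*x + 1/4 < 1.
Proof.
move=> hb [hJ [_ [_ [m _]]]]; move: m; rewrite /mt hb => -[_ e]; split => //.
by rewrite -e; congr eta; rlra.
Qed.
Lemma At_4 (eta : R -> R) (b1 b2 b3 b4 : bool) (x : R) : b4 -> At eta b1 b2 b3 b4 (-3/2*x + 7/4) ->
  eta x = -3/2*x + 7/4 /\ 1/2 < -3/2*x + 7/4 < 1.
Proof.
move=> hb [hJ [_ [_ [_ m]]]]; move: m; rewrite /mt hb => -[_ e]; split => //.
by rewrite -e; congr eta; rlra.
Qed.

Lemma At_1' (eta : R -> R) (b1 b2 b3 b4 : bool) (x : R) : eta x = 4*x + -1 -> At eta b1 b2 b3 b4 (4*x + -1) -> b1.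
Proof.
move=> e [hJ [m _]]; case: b1 m => //= m; exfalso; apply: m; split => //.
by rewrite -e; congr eta; rlra.
Qed.
Lemma At_2' (eta : R -> R) (b1 b2 b3 b4 : bool) (x : R) : eta x = -4*x + 3 -> At eta b1 b2 b3 b4 (-4*x + 3) -> b2.
Proof.
move=> e [hJ [_ [m _]]]; case: b2 m => //= m; exfalso; apply: m; split => //.
by rewrite -e; congr eta; rlra.
Qed.
Lemma At_3' (eta : R -> R) (b1 b2 b3 b4 : bool) (x : R) : eta x = 3/2*x + 1/4 -> At eta b1 b2 b3 b4 (3/2*x + 1/4) -> b3.
Proof.
move=> e [hJ [_ [_ [m _]]]]; case: b3 m => //= m; exfalso; apply: m; split => //.
by rewrite -e; congr eta; rlra.
Qed.
Lemma At_4' (eta : R -> R) (b1 b2 b3 b4 : bool) (x : R) : eta x = -3/2*x + 7/4 -> At eta b1 b2 b3 b4 (-3/2*x + 7/4) -> b4.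
Proof.
move=> e [hJ [_ [_ [_ m]]]]; case: b4 m => //= m; exfalso; apply: m; split => //.
by rewrite -e; congr eta; rlra.
Qed.

Lemma preim_At (eta : R -> R) (H3 : forall x, unit_interval x -> eta x = tau1 x \/ eta x = tau2 x)
  (b1 b2 b3 b4 : bool) (x : R) :
  Defs.preim eta (At eta b1 b2 b3 b4) x <->
  ((b1 /\ pc (At eta b1 b2 b3 b4) 4 (-1) x) \/ (b2 /\ pc (At eta b1 b2 b3 b4) (-4) 3 x)) \/
  ((b3 /\ pc (At eta b1 b2 b3 b4) (3/2) (1/4) x) \/ (b4 /\ pc (At eta b1 b2 b3 b4) (-3/2) (7/4) x)).
Proof.
split.
- move=> [hx hA]; have [j1 j2] := hA.1.
  case: (H3 x hx) => He.
  + case: (tau1_cases x) => [[c e]|[[c e]|[[c e]|[c e]]]]; rewrite e in He; try (exfalso; rlra).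
    * have E : eta x = 4*x + -1 by rlra.
      have hA' : At eta b1 b2 b3 b4 (4*x + -1) by rewrite -E.
      by left; left; split; [exact: (At_1' _ _ _ _ _ _ E hA')|exact: hA'].
    * have E : eta x = -4*x + 3 by rlra.
      have hA' : At eta b1 b2 b3 b4 (-4*x + 3) by rewrite -E.
      by left; right; split; [exact: (At_2' _ _ _ _ _ _ E hA')|exact: hA'].
  + case: (tau2_cases x) => [[c e]|[[c e]|[[c e]|[c e]]]]; rewrite e in He; try (exfalso; rlra).
    * have E : eta x = 3/2*x + 1/4 by rlra.
      have hA' : At eta b1 b2 b3 b4 (3/2*x + 1/4) by rewrite -E.
      by right; left; split; [exact: (At_3' _ _ _ _ _ _ E hA')|exact: hA'].
    * have E : eta x = -3/2*x + 7/4 by rlra.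
      have hA' : At eta b1 b2 b3 b4 (-3/2*x + 7/4) by rewrite -E.
      by right; right; split; [exact: (At_4' _ _ _ _ _ _ E hA')|exact: hA'].
- case=> [[[hb h]|[hb h]]|[[hb h]|[hb h]]].
  + have [E hr] := At_1 _ _ _ _ _ _ hb h.
    by split; [rewrite /unit_interval; rlra|rewrite E; exact: h].
  + have [E hr] := At_2 _ _ _ _ _ _ hb h.
    by split; [rewrite /unit_interval; rlra|rewrite E; exact: h].
  + have [E hr] := At_3 _ _ _ _ _ _ hb h.
    by split; [rewrite /unit_interval; rlra|rewrite E; exact: h].
  + have [E hr] := At_4 _ _ _ _ _ _ hb h.
    by split; [rewrite /unit_interval; rlra|rewrite E; exact: h].
Qed.

Lemma mm_pcb (S : R -> Prop) (b : bool) c d : borel S -> bnd S -> c <> 0 ->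
  mm (fun x => b /\ pc S c d x) = if b then mm S / Rabs c else 0.
Proof.
move=> bS dS c0; case: b.
  by rewrite -(mm_pc S c d) //; apply: mm_ext => x; split => [[]|].
by apply: mm_empty => x [].
Qed.

Lemma borel_pcb (S : R -> Prop) (b : bool) c d : borel S -> borel (fun x => b /\ pc S c d x).
Proof.
move=> bS; case: b.
  by apply: (borel_ext _ _ (borel_pc _ c d bS)) => x; split => [|[]].
by apply: (borel_ext _ _ borel_empty) => x; split => // -[].
Qed.

Ltac piece h :=
  first [ destruct (At_1 _ _ _ _ _ _ (proj1 h) (proj2 h))
        | destruct (At_2 _ _ _ _ _ _ (proj1 h) (proj2 h))
        | destruct (At_3 _ _ _ _ _ _ (proj1 h) (proj2 h))
        | destruct (At_4 _ _ _ _ _ _ (proj1 h) (proj2 h)) ].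

Lemma atom_null (eta : R -> R)
  (H1 : forall x, unit_interval x -> unit_interval (eta x))
  (H2 : borel_measurable01 eta)
  (H3 : forall x, unit_interval x -> eta x = tau1 x \/ eta x = tau2 x)
  (H4 : preserves_lebesgue eta) (b1 b2 b3 b4 : bool) : null (At eta b1 b2 b3 b4).
Proof.
have bA := borel_At eta H1 H2 b1 b2 b3 b4.
have dA : bnd (At eta b1 b2 b3 b4) by apply: bnd01 => y [[? ?] _]; rlra.
split => //; split => //.
have sA : subset01 (At eta b1 b2 b3 b4) by move=> y [[? ?] _]; rewrite /unit_interval; rlra.
have e := H4 _ bA sA.
rewrite !leb_mm // in e; last exact: preim01.
rewrite (mm_ext _ _ (preim_At eta H3 b1 b2 b3 b4)) in e.
rewrite !mm_union in e;
  try (apply: borel_or; apply: borel_pcb; exact: bA);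
  try (apply: borel_pcb; exact: bA);
  try (apply: bnd01 => x [h|h]; piece h; rlra);
  try (apply: bnd01 => x [[h|h]|[h|h]]; piece h; rlra);
  try (apply: bnd01 => x h; piece h; rlra);
  try (move=> x [h|h] [h'|h']; piece h; piece h'; rlra);
  try (move=> x h h'; piece h; piece h'; rlra).
rewrite !mm_pcb // in e; try rlra.
have r1 : Rabs 4 = 4 by rewrite Rabs_pos_eq; rlra.
have r2 : Rabs (3/2) = 3/2 by rewrite Rabs_pos_eq; rlra.
have r3 : Rabs (-4) = 4 by rewrite Rabs_left; rlra.
have r4 : Rabs (-3/2) = 3/2 by rewrite Rabs_left; rlra.
rewrite r1 r2 r3 r4 in e.
move: e; clear bA dA sA; case: b1; case: b2; case: b3; case: b4 => /= e; rlra.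
Qed.

Lemma part_nonex : ~ (exists eta : R -> R,
       (forall x, unit_interval x -> unit_interval (eta x)) /\
       borel_measurable01 eta /\
       (forall x, unit_interval x -> eta x = tau1 x \/ eta x = tau2 x) /\
       preserves_lebesgue eta).
Proof.
move=> [eta [H1 [H2 [H3 H4]]]].
have n4 : forall b1 b2 b3, null (fun y => exists b4, At eta b1 b2 b3 b4 y).
  by move=> b1 b2 b3; apply: null_ex => b4; exact: atom_null.
have n3 : forall b1 b2, null (fun y => exists b3 b4, At eta b1 b2 b3 b4 y).
  by move=> b1 b2; apply: null_ex => b3; exact: n4.
have n2 : forall b1, null (fun y => exists b2 b3 b4, At eta b1 b2 b3 b4 y).
  by move=> b1; apply: null_ex => b2; exact: n3.
have n1 : null (fun y => exists b1 b2 b3 b4, At eta b1 b2 b3 b4 y).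
  by apply: null_ex => b1; exact: n2.
have [_ [d0 m0]] := n1.
have pick : forall P : Prop, exists b, mt b P.
  by move=> P; case: (Classical_Prop.classic P) => h; [exists true|exists false].
have hJ := mm_le (fun y => 1/2 < y < 1) _ d0.
rewrite mm_itv in hJ; last rlra.
have : 1 - 1/2 <= 0.
  rewrite -m0; apply: hJ => y hy.
  have [b1 m1] := pick (Ek eta (1/4) (1/4) y).
  have [b2 m2] := pick (Ek eta (-1/4) (3/4) y).
  have [b3 m3] := pick (Ek eta (2/3) (-1/6) y).
  have [b4 m4] := pick (Ek eta (-2/3) (7/6) y).
  by exists b1, b2, b3, b4.
rlra.
Qed.

Require Import Defs.

Theorem mainTheorem5 :
  preserves_step_density (3/2) (1/2) tau1 /\
  preserves_step_density (2/3) (4/3) tau2 /\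
  (forall x, unit_interval x ->
     1 = 2/5 * step_density (3/2) (1/2) x + 3/5 * step_density (2/3) (4/3) x) /\
  ~ (exists eta : R -> R,
       (forall x, unit_interval x -> unit_interval (eta x)) /\
       borel_measurable01 eta /\
       (forall x, unit_interval x -> eta x = tau1 x \/ eta x = tau2 x) /\
       preserves_lebesgue eta) /\
  (forall x, unit_interval x -> tau1 x <= tau x <= tau2 x) /\
  preserves_lebesgue tau.
Proof.
split; first exact: part_tau1.
split; first exact: part_tau2.
split; first exact: part_dens.
split; first exact: part_nonex.
split; first exact: part_ineq.
exact: part_tau.
Qed.
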